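(* Let $n \geq d \geq 1$, let $\bar{w}\in\mathbb{R}^d$, let $\bar{\pi}$ be a permutation of $[n]$, let $x_0,x_1,\dots,x_n$ be i.i.d.\ draws from $N(0,I_d)$, and set $y_0 := \bar{w}^\top x_0$, $y_i := \bar{w}^\top x_{\bar{\pi}(i)}$ for $i\in[n]$. Let $X = [x_1|\cdots|x_n]^\top\in\mathbb{R}^{n\times d}$, let $X^\dagger = [\tilde{x}_1|\cdots|\tilde{x}_n]$ be its Moore–Penrose pseudoinverse, and let $c_{i,j} := y_i\,\tilde{x}_j^\top x_0$ for $(i,j)\in[n]\times[n]$. Then $X$ has rank $d$ almost surely, and the set $\mathcal{S}_{\bar{\pi}} := \{(i,j)\in[n]\times[n] : \bar{\pi}(i) = j\}$ satisfies $y_0 = \sum_{(i,j)\in\mathcal{S}_{\bar{\pi}}} c_{i,j}$ (almost surely). *)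

(* Defs.v *)
From HB Require Import structures.
From mathcomp Require Import all_boot all_order all_algebra perm.
From mathcomp Require Import all_classical all_reals all_analysis.
Set Implicit Arguments. Unset Strict Implicit. Unset Printing Implicit Defensive.
Import Order.TTheory GRing.Theory Num.Theory.
Local Open Scope classical_set_scope.
Local Open Scope ring_scope.

(* Mutual independence of a finite family of real random variables:
   the joint law factorizes on all products of measurable sets
   (taking B i = setT recovers every finite subfamily). *)
Definition mutually_independent d (T : measurableType d) (R : realType)
    (P : probability T R) (I : finType) (X : I -> {RV P >-> R}) : Prop :=
  forall B : I -> set R, (forall i, measurable (B i)) ->
    P (\bigcap_(i in [set: I]) (X i @^-1` B i)) =
    (\prod_(i : I) P (X i @^-1` B i))%E.

Definition std_normal d (T : measurableType d) (R : realType)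
    (P : probability T R) (X : {RV P >-> R}) : Prop :=
  forall A : set R, measurable A -> distribution P X A = normal_prob 0 1 A.

(* The four Penrose conditions characterizing the Moore–Penrose pseudoinverse
   Y of X (real matrices, so conjugate transpose = transpose). *)
Definition penrose (R : realType) (m n : nat)
    (X : 'M[R]_(m, n)) (Y : 'M[R]_(n, m)) : Prop :=
  [/\ X *m Y *m X = X, Y *m X *m Y = Y,
      (X *m Y)^T = X *m Y & (Y *m X)^T = Y *m X].

(* The Moore–Penrose pseudoinverse (exists and is unique over the reals). *)
Definition mp_pinv (R : realType) (m n : nat) (X : 'M[R]_(m, n)) : 'M[R]_(n, m) :=
  xget 0 [set Y | penrose X Y].

(* Main.v *)
Require Import Defs.
From HB Require Import structures.
From mathcomp Require Import all_boot all_order all_algebra perm.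
From mathcomp Require Import all_classical all_reals all_analysis.
Import Order.TTheory GRing.Theory Num.Theory.
Local Open Scope ring_scope.

Section Alg.
Context (R : realType) (n d : nat).

Lemma full_rank_left_inv (X : 'M[R]_(n, d)) : \rank X = d ->
  exists B : 'M[R]_(d, n), B *m X = 1%:M.
Proof. by move=> rk; apply/row_fullP; rewrite /row_full rk. Qed.

Lemma gram_unit (X : 'M[R]_(n, d)) : \rank X = d -> X^T *m X \in unitmx.
Proof.
move=> rk; have [B BX] := full_rank_left_inv X rk.
rewrite unitmxE unitfE; apply/det0P => -[v vn0 vX].
have u0 : v *m X^T = 0.
  have h : (v *m X^T) *m (v *m X^T)^T = 0.
    by rewrite trmx_mul trmxK mulmxA -(mulmxA v) vX mul0mx.
  apply/matrixP => i j; rewrite [RHS]mxE [i]ord1.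
  move/matrixP: h => /(_ 0 0) hs; rewrite mxE in hs; rewrite mxE in hs.
  have nn : forall k, true -> 0 <= (v *m X^T) 0 k * (v *m X^T)^T k 0.
    by move=> k _; rewrite [X in _ * X]mxE -expr2 sqr_ge0.
  have := @psumr_eq0P _ _ xpredT _ nn hs j isT.
  have e : (v *m X^T)^T j 0 = (v *m X^T) 0 j by rewrite mxE.
  rewrite e => /eqP; rewrite mulf_eq0 orbb; by move/eqP.
apply/negP: vn0; rewrite negbK.
have : (B *m (X *m v^T))^T = 0.
  by rewrite !trmx_mul trmxK u0 mul0mx.
by rewrite mulmxA BX mul1mx trmxK => ->.
Qed.

Lemma penrose_ex (X : 'M[R]_(n, d)) : \rank X = d -> exists Y, penrose X Y.
Proof.
move=> rk; have U := gram_unit X rk.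
exists (invmx (X^T *m X) *m X^T); split.
- by rewrite !mulmxA -(mulmxA _ _ X) -(mulmxA X) mulVmx // mulmx1.
- by rewrite -!mulmxA (mulmxA X^T) mulmxA mulVmx // mul1mx.
- rewrite !trmx_mul trmxK trmx_inv trmx_mul trmxK mulmxA //.
- by rewrite -mulmxA mulVmx // trmx1.
Qed.


Lemma pinv_left (X : 'M[R]_(n, d)) : \rank X = d -> mp_pinv X *m X = 1%:M.
Proof.
move=> rk; have [B BX] := full_rank_left_inv X rk.
have [h1 _ _ _] : penrose X (mp_pinv X) by apply: xgetPex; exact: penrose_ex.
have : B *m (X *m mp_pinv X *m X) = B *m X by rewrite h1.
by rewrite !mulmxA BX mul1mx.
Qed.

Lemma sum_graph (G : 'I_n -> 'I_n -> R) (s : {perm 'I_n}) :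
  \sum_(p : 'I_n * 'I_n | s p.1 == p.2) G p.1 p.2 = \sum_i G i (s i).
Proof.
rewrite (eq_bigl (fun p => xpredT p.1 && (s p.1 == p.2))) //.
rewrite -(pair_big_dep xpredT (fun i j => s i == j) G).
apply: eq_bigr => i _; apply: big_pred1 => j; by rewrite /= eq_sym.
Qed.

Lemma sum_id (X : 'M[R]_(n, d)) (Y : 'M[R]_(d, n)) (YX : Y *m X = 1%:M)
  (wbar x0 : 'cV[R]_d) (s : {perm 'I_n}) :
  (wbar^T *m x0) 0 0 = \sum_(p : 'I_n * 'I_n | s p.1 == p.2)
     (wbar^T *m (row (s p.1) X)^T) 0 0 * ((col p.2 Y)^T *m x0) 0 0.
Proof.
rewrite (sum_graph (fun i j => (wbar^T *m (row (s i) X)^T) 0 0 * ((col j Y)^T *m x0) 0 0)).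
rewrite -(reindex_inj (h := s) (P := xpredT)
   (F := fun j => (wbar^T *m (row j X)^T) 0 0 * ((col j Y)^T *m x0) 0 0)) /=; last exact: perm_inj.
have -> : wbar^T *m x0 = wbar^T *m X^T *m (Y^T *m x0).
  by rewrite mulmxA -(mulmxA _ X^T) -trmx_mul YX trmx1 mulmx1.
rewrite [LHS]mxE; apply: eq_bigr => j _.
congr (_ * _); rewrite !mxE; apply: eq_bigr => a _; rewrite !mxE //.
Qed.


Lemma rank_from_det (hdn : (d <= n)%N) (X : 'M[R]_(n, d)) :
  \det (rowsub (widen_ord hdn) X) != 0 -> \rank X = d.
Proof.
move=> h; apply/eqP; rewrite eqn_leq rank_leq_col /=.
have U : rowsub (widen_ord hdn) X \in unitmx by rewrite unitmxE unitfE.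
by rewrite -{1}(mxrank_unit U) mxrankS // rowsub_sub.
Qed.

End Alg.

Local Open Scope classical_set_scope.
Local Open Scope ring_scope.

Lemma det_meas (R : realType) d0 (T0 : measurableType d0) m (A : T0 -> 'M[R]_m) :
  (forall i j, measurable_fun setT (fun w => A w i j)) ->
  measurable_fun setT (fun w => \det (A w)).
Proof.
move=> mA.
have -> : (fun w => \det (A w)) = (fun w => \sum_(s <- index_enum {perm 'I_m}) (-1) ^+ s * \prod_i A w i (s i)).
  by apply: funext => w; rewrite /determinant.
apply: measurable_sum => s.
apply: measurable_realfun.measurable_funM; first exact: measurable_cst.
by apply: measurable_prod => i _; apply: mA.
Qed.

Section Indep.
Context (R : realType) (dT : measure_display) (T : measurableType dT)
  (P : probability T R) (I : finType) (Z : I -> {RV P >-> R})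
  (hind : mutually_independent Z).

Definition Gk (k0 : I) : set (set T) :=
  [set A | exists B : I -> set R, (forall i, measurable (B i)) /\ B k0 = setT /\
     A = \bigcap_(i in [set: I]) (Z i @^-1` B i)].

Lemma Gk_meas k0 : Gk k0 `<=` measurable.
Proof.
move=> _ [B [mB [_ ->]]]; apply: fin_bigcap_measurable; first exact: finite_finset.
by move=> i _; apply: measurable_funPTI.
Qed.

Lemma Gk_setI k0 : setI_closed (Gk k0).
Proof.
move=> _ _ [B [mB [Bk ->]]] [B' [mB' [Bk' ->]]].
exists (fun i => B i `&` B' i); split; first by move=> i; apply: measurableI.
split; first by rewrite Bk Bk' setIT.
apply/seteqP; split => w /=.
  by move=> [H1 H2] i _; split; [exact: H1|exact: H2].
by move=> H; split => i _; have [] := H i Logic.I.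
Qed.

Lemma Gk_indep k0 A C : Gk k0 A -> measurable C ->
  P (A `&` Z k0 @^-1` C) = (P (Z k0 @^-1` C) * P A)%E.
Proof.
move=> [B [mB [Bk ->]]] mC.
pose B' := fun i => if i == k0 then C else B i.
have -> : \bigcap_(i in [set: I]) (Z i @^-1` B i) `&` Z k0 @^-1` C =
   \bigcap_(i in [set: I]) (Z i @^-1` B' i).
  apply/seteqP; split => w /=.
    move=> [H1 H2] i _; rewrite /B'; case: eqP => [->//|_]; exact: H1.
  move=> H; split; last by have := H k0 Logic.I; rewrite /B' eqxx.
  move=> i _; have := H i Logic.I; rewrite /B'; case: eqP => [->|//].
  by rewrite Bk.
rewrite (hind B'); last by move=> i; rewrite /B'; case: (i == k0).
rewrite (hind B) //.
rewrite (bigD1 k0) //= [in RHS](bigD1 k0) //= Bk preimage_setT probability_setT mul1e.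
rewrite /B' eqxx; congr (_ * _)%E; apply: eq_bigr => i /negPf ->; by [].
Qed.


Lemma sigma_indep k0 A C : <<s Gk k0 >> A -> measurable C ->
  P (A `&` Z k0 @^-1` C) = (P (Z k0 @^-1` C) * P A)%E.
Proof.
move=> sA mC.
have mYC : measurable (Z k0 @^-1` C) := measurable_funPTI _ mC.
pose r := NngNum (fine_ge0 (measure_ge0 P (Z k0 @^-1` C))).
have E : mrestr P mYC A = mscale r P A.
  apply: (@g_sigma_algebra_measure_unique _ R T (Gk k0) (@Gk_meas k0)
    (fun _ => setT) _ _ (mrestr P mYC) (mscale r P) (@Gk_setI k0)) => //.
  - move=> _; exists (fun _ => setT); split => //; split => //.
    by apply/seteqP; split => w //= _ i _.
  - by apply/seteqP; split => w // _; exists 0%N.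
  - move=> B GB.
    change (P (B `&` Z k0 @^-1` C) = (fine (P (Z k0 @^-1` C)))%:E * P B)%E.
    rewrite fineK; last exact: fin_num_measure.
    exact: Gk_indep.
  - move=> _; change (P ([set: T] `&` Z k0 @^-1` C) < +oo)%E.
    apply: (le_lt_trans (probability_le1 _ _)) => //; last exact: ltry. exact: (measurableI _ _ measurableT mYC).
move: E.
change (P (A `&` Z k0 @^-1` C) = (fine (P (Z k0 @^-1` C)))%:E * P A -> 
  P (A `&` Z k0 @^-1` C) = P (Z k0 @^-1` C) * P A)%E.
rewrite fineK //; exact: fin_num_measure.
Qed.


Lemma sigma_sub k0 : <<s Gk k0 >> `<=` measurable.
Proof. exact: smallest_sub (@sigma_algebra_measurable _ T) (@Gk_meas k0). Qed.

Section Key.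
Variable k0 : I.
Variables (d2 : measure_display) (T2 : measurableType d2) (W : T -> T2).
Hypothesis mW : measurable_fun (T := g_sigma_algebraType (Gk k0)) [set: g_sigma_algebraType (Gk k0)] W.

Lemma mWT : measurable_fun [set: T] W.
Proof.
move=> _ B mB; have := mW measurableT B mB.
by move/sigma_sub.
Qed.

HB.instance Definition _ := isMeasurableFun.Build _ _ T T2 W mWT.

Definition WY (w : T) : T2 * R := (W w, Z k0 w).

Lemma mWY : measurable_fun [set: T] WY.
Proof. exact: measurable_fun_pair mWT (measurable_funPT (Z k0)). Qed.

HB.instance Definition _ := isMeasurableFun.Build _ _ T _ WY mWY.

Lemma key_zero (S : set (T2 * R)) : measurable S ->
  (forall t, distribution P (Z k0) (xsection S t) = 0%E) ->
  P (WY @^-1` S) = 0%E.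
Proof.
move=> mS hS.
have rect : forall A B, measurable A -> measurable B ->
   distribution P WY (A `*` B) = (distribution P W A * distribution P (Z k0) B)%E.
  move=> A B mA mB.
  rewrite /distribution /pushforward.
  have -> : WY @^-1` (A `*` B) = W @^-1` A `&` Z k0 @^-1` B.
    by apply/seteqP; split => w [].
  rewrite sigma_indep; [by rewrite muleC| |by []].
  by have := mW measurableT A mA; rewrite setTI.
have E := product_measure_unique rect mS.
rewrite -[LHS]/(distribution P WY S) -E.
rewrite /product_measure1; apply: integral0_eq => t _ /=; exact: hS.
Qed.

End Key.


Lemma Zk_meas k0 k : k != k0 ->
  measurable_fun (T := g_sigma_algebraType (Gk k0)) [set: g_sigma_algebraType (Gk k0)] (Z k).
Proof.
move=> kk0 _ B mB; rewrite setTI; apply: sub_sigma_algebra.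
exists (fun i => if i == k then B else setT); split.
  by move=> i; case: (i == k).
split; first by rewrite eq_sym (negPf kk0).
apply/seteqP; split => w /=.
  by move=> Bw i _; case: eqP => // ->.
by move=> H; have := H k Logic.I; rewrite eqxx.
Qed.

End Indep.

Section Det.
Context (R : realType) (dT : measure_display) (T : measurableType dT)
  (P : probability T R) (I : finType) (Z : I -> {RV P >-> R})
  (hind : mutually_independent Z) (hnorm : forall k, std_normal (Z k)).

Local Notation GG k0 := (Gk R dT T P I Z k0).

Definition Amat m (f : 'I_m * 'I_m -> I) (w : T) : 'M[R]_m :=
  \matrix_(i, j) Z (f (i, j)) w.
Arguments Amat {m}.

Lemma S_meas : measurable [set p : (R * R) * R | p.2 * p.1.1 + p.1.2 = 0 /\ p.1.1 != 0].
Proof.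
have mF : measurable_fun setT (fun p : (R * R) * R => p.2 * p.1.1 + p.1.2).
  apply: measurable_realfun.measurable_funD.
    apply: measurable_realfun.measurable_funM; first exact: measurable_snd.
    exact: measurableT_comp measurable_fst measurable_fst.
  exact: measurableT_comp measurable_snd measurable_fst.
have mG : measurable_fun setT (fun p : (R * R) * R => p.1.1).
  exact: measurableT_comp measurable_fst measurable_fst.
have -> : [set p : (R * R) * R | p.2 * p.1.1 + p.1.2 = 0 /\ p.1.1 != 0] =
  (setT `&` (fun p : (R * R) * R => p.2 * p.1.1 + p.1.2) @^-1` [set 0]) `&`
  (setT `&` (fun p : (R * R) * R => p.1.1) @^-1` (~` [set 0])).
  apply/seteqP; split => p /=.
    by move=> [H1 /eqP H2].
  by move=> [[_ H1] [_ /eqP H2]].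
apply: measurableI.
  by apply: mF => //; exact: measurable_set1.
by apply: mG => //; apply: measurableC; exact: measurable_set1.
Qed.

Lemma xsec_zero k (t : R * R) :
  distribution P (Z k) (xsection [set p : (R * R) * R | p.2 * p.1.1 + p.1.2 = 0 /\ p.1.1 != 0] t) = 0%E.
Proof.
rewrite hnorm; last exact: measurable_xsection S_meas.
rewrite /normal_prob; apply: (integral_Sset1 (- t.2 / t.1)).
move=> y; rewrite /xsection /= inE /= => -[H1 H2].
by move/eqP: H1; rewrite addr_eq0 => /eqP <-; rewrite mulfK.
Qed.


Lemma Amat_entry_meas m (f : 'I_m.+1 * 'I_m.+1 -> I) (finj : injective f) (a b : 'I_m.+1) :
  (a, b) != (ord_max, ord_max) ->
  measurable_fun (T := g_sigma_algebraType (GG (f (ord_max, ord_max))))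
    [set: g_sigma_algebraType (GG (f (ord_max, ord_max)))] (fun w => Amat f w a b).
Proof.
move=> ab.
have -> : (fun w => Amat f w a b) = Z (f (a, b)).
  by apply: funext => w; rewrite /Amat mxE.
apply: Zk_meas; apply/eqP => /finj /eqP; exact/negP.
Qed.

Lemma cof_meas m (f : 'I_m.+1 * 'I_m.+1 -> I) (finj : injective f) j :
  measurable_fun (T := g_sigma_algebraType (GG (f (ord_max, ord_max))))
    [set: g_sigma_algebraType (GG (f (ord_max, ord_max)))]
    (fun w => cofactor (Amat f w) ord_max j).
Proof.
have -> : (fun w => cofactor (Amat f w) ord_max j) =
   (fun w => (-1) ^+ ((ord_max : 'I_m.+1) + j)%N * \det (row' ord_max (col' j (Amat f w)))).
  by [].
apply: measurable_realfun.measurable_funM; first exact: measurable_cst.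
apply: (@det_meas R _ (g_sigma_algebraType (GG (f (ord_max, ord_max)))) m (fun w => row' ord_max (col' j (Amat f w)))) => a b.
have -> : (fun w => row' ord_max (col' j (Amat f w)) a b) =
   (fun w => Amat f w (lift ord_max a) (lift j b)).
  by apply: funext => w; rewrite !mxE.
apply: Amat_entry_meas => //.
by rewrite xpair_eqE negb_and eq_sym neq_lift.
Qed.


Lemma det_negl m (f : 'I_m * 'I_m -> I) : injective f ->
  P.-negligible [set w | \det (Amat f w) = 0].
Proof.
elim: m f => [|m IH] f finj.
  have -> : [set w | \det (Amat f w) = 0] = set0.
    by apply/seteqP; split => w //=; rewrite det_mx00 => /eqP; rewrite oner_eq0.
  exact: negligible_set0.
set k0 := f (ord_max, ord_max).
pose f' := fun p : 'I_m * 'I_m => f (lift ord_max p.1, lift ord_max p.2).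
have f'inj : injective f'.
  move=> [a b] [a' b'] /finj /= /eqP; rewrite xpair_eqE.
  by move=> /andP [/eqP/lift_inj ha /eqP/lift_inj hb]; rewrite ha hb.
pose c w := cofactor (Amat f w) ord_max ord_max.
pose r w := \sum_(j < m) Amat f w ord_max (widen_ord (leqnSn m) j) *
   cofactor (Amat f w) ord_max (widen_ord (leqnSn m) j).
pose W w := (c w, r w).
have mW : measurable_fun (T := g_sigma_algebraType (GG k0)) setT W.
  apply: measurable_fun_pair; first exact: cof_meas.
  apply: measurable_sum => j.
  apply: measurable_realfun.measurable_funM; last exact: cof_meas.
  apply: Amat_entry_meas => //.
  by rewrite xpair_eqE eqxx andTb -val_eqE /= ltn_eqF.
pose S := [set p : (R * R) * R | p.2 * p.1.1 + p.1.2 = 0 /\ p.1.1 != 0].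
have Z0 := @key_zero R dT T P I Z hind k0 _ _ W mW S S_meas (xsec_zero k0).
have mS' : measurable (WY R dT T P I Z k0 _ _ W @^-1` S).
  by have := @mWY _ _ _ _ _ _ k0 _ _ W mW measurableT S S_meas; rewrite setTI.
apply: (negligibleS _ (negligibleU (IH f' f'inj) (ex_intro _ _ (And3 mS' Z0 (@subset_refl _ _))))).
move=> w /= hdet.
have Ec : c w = (-1) ^+ (m + m)%N * \det (Amat f' w).
  rewrite /c /cofactor /=; congr (_ * \det _).
  by apply/matrixP => a b; rewrite !mxE.
have Ed : \det (Amat f w) = r w + Z k0 w * c w.
  by rewrite (expand_det_row _ ord_max) big_ord_recr /= mxE.
have [h0|hn0] := eqVneq (\det (Amat f' w)) 0; first by left.
right; rewrite /WY /S /=; split.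
  by rewrite addrC -Ed.
by rewrite Ec mulf_neq0 // signr_eq0.
Qed.

End Det.

Theorem mainTheorem2 (R : realType) (n d : nat) (hd1 : (1 <= d)%N) (hdn : (d <= n)%N)
    (wbar : 'cV[R]_d) (pibar : {perm 'I_n})
    (dT : measure_display) (T : measurableType dT) (P : probability T R)
    (Z : 'I_n.+1 * 'I_d -> {RV P >-> R})
    (hind : mutually_independent Z)
    (hnorm : forall k, std_normal (Z k)) :
  let x (k : 'I_n.+1) (w : T) : 'cV[R]_d := \col_l Z (k, l) w in
  let x0 w := x ord0 w in
  let xs (i : 'I_n) w := x (lift ord0 i) w in
  let y0 w := (wbar^T *m x0 w) 0 0 in
  let y (i : 'I_n) w := (wbar^T *m xs (pibar i) w) 0 0 in
  let X w : 'M[R]_(n, d) := \matrix_(i < n, l < d) xs i w l 0 in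
  let xt (j : 'I_n) w : 'cV[R]_d := col j (mp_pinv (X w)) in
  let c (i j : 'I_n) w := y i w * ((xt j w)^T *m x0 w) 0 0 in
  {ae P, forall w, \rank (X w) = d /\
     y0 w = \sum_(p : 'I_n * 'I_n | pibar p.1 == p.2) c p.1 p.2 w}.
Proof.
move=> x x0 xs y0 y X xt c.
pose f : 'I_d * 'I_d -> 'I_n.+1 * 'I_d := fun p => (lift ord0 (widen_ord hdn p.1), p.2).
have finj : injective f.
  move=> [a b] [a' b'] /eqP; rewrite xpair_eqE => /andP [/eqP/lift_inj ha /eqP hb].
  congr (_, _) => //; apply: val_inj; exact: (congr1 val ha).
have N := @det_negl _ _ _ _ _ Z hind hnorm _ f finj.
apply: (negligibleS _ N).
move=> w /= nQ.
have [//|hdet] := eqVneq (\det (Amat _ _ _ _ _ Z _ f w)) 0.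
exfalso; apply: nQ.
have EA : Amat _ _ _ _ _ Z _ f w = rowsub (widen_ord hdn) (X w).
  by apply/matrixP => a b; rewrite !mxE.
rewrite EA in hdet.
have rk := @rank_from_det _ _ _ hdn _ hdet.
split => //.
have Exs : forall j, xs j w = (row j (X w))^T.
  by move=> j; apply/matrixP => a b; rewrite !mxE.
rewrite /y0 (@sum_id _ _ _ _ _ (@pinv_left _ _ _ _ rk) wbar (x0 w) pibar).
apply: eq_bigr => p _; rewrite /c /y /xt Exs //.
Qed.
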